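(* Let $\mathbf{Y}=(\{0,1\}^{\mathbb{Z}},\mathcal{B},\nu,S)$ with $\nu=(\tfrac12(\delta_0+\delta_1))^{\otimes\mathbb{Z}}$ and $S$ the left shift, let $\xi$ be the coordinate process, and let $\tau$ be the cellular automaton $\tau((a_n)_n)=(\tau_0(a_n,a_{n+1}))_n$ with $\tau_0(1,1)=1$ and $\tau_0=0$ otherwise. For every $n\ge0$, $h_\nu(\tau^n\xi,S)\le3\log(2)\,2^{-n/2}$.
   Context: The coordinate process is $\xi_i(a)=a_i$; $\tau^n\xi$ is the process $((\tau^na)_i)_{i\in\mathbb{Z}}$. For a finite-valued process $\eta$, $h_\nu(\eta,S)=\lim_m\frac1mH_\nu(\eta_{[0,m]})$ with $H_\nu$ Shannon entropy. *)

(* Defs.v *)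
From mathcomp Require Import all_boot all_order all_algebra.
From mathcomp Require Import all_classical all_reals all_analysis.
Set Implicit Arguments. Unset Strict Implicit. Unset Printing Implicit Defensive.
Import Order.TTheory GRing.Theory Num.Theory.
Local Open Scope ring_scope.

Definition config := int -> bool.

Definition tau0 (b c : bool) : bool := b && c.

Definition tau (a : config) : config := fun i => tau0 (a i) (a (i + 1)).

Definition tau_iter (n : nat) (a : config) : config := iter n tau a.

(* Extension of a finite word u on the window [0, N] to a configuration
   (the values outside the window are irrelevant for events depending
   only on coordinates in [0, N]; we put 0 there). *)
Definition ext (N : nat) (u : {ffun 'I_N.+1 -> bool}) : config :=
  fun i => match i with
           | Posz k => if insub k is Some j then u j else false
           | Negz _ => false
           end.

(* nu = (1/2 (delta_0 + delta_1))^{\otimes Z}: the probability under nu of an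
   event depending only on the coordinates in [0, N] is
   #{u in {0,1}^{[0,N]} : ext u in E} / 2^(N+1). *)
Definition nu_window {R : realType} (N : nat) (E : config -> bool) : R :=
  #|[set u : {ffun 'I_N.+1 -> bool} | E (ext u)]|%:R / (2 ^+ N.+1).

Definition block (n m : nat) (a : config) : {ffun 'I_m.+1 -> bool} :=
  [ffun i : 'I_m.+1 => tau_iter n a (Posz (nat_of_ord i))].

(* The block (tau^n xi)_[0,m] depends only on coordinates in [0, m+n];
   its law under nu: *)
Definition block_law {R : realType} (n m : nat) (w : {ffun 'I_m.+1 -> bool}) : R :=
  nu_window (m + n) (fun a => block n m a == w).

Definition shannon {R : realType} {X : finType} (p : X -> R) : R :=
  - \sum_(x : X) (if p x == 0 then 0 else p x * ln (p x)).

Definition H_block {R : realType} (n m : nat) : R := shannon (@block_law R n m).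

(* h_nu(tau^n xi, S) is the limit of (1/m) H_nu((tau^n xi)_[0,m]) *)
Definition entropy_seq {R : realType} (n : nat) : nat -> R :=
  fun m => (m%:R)^-1 * H_block n m.

(* Main.v *)
Require Import Defs.
From mathcomp Require Import all_boot all_order all_algebra.
From mathcomp Require Import all_classical all_reals all_analysis.
From mathcomp Require Import zify ring lra.
Import Order.TTheory GRing.Theory Num.Theory.
Import numFieldNormedType.Exports.

Local Open Scope ring_scope.
Set Implicit Arguments. Unset Strict Implicit. Unset Printing Implicit Defensive.

Definition dep {T : Type} (N : nat) (E : config -> T) :=
  forall a a' : config, (forall k : nat, (k <= N)%N -> a (Posz k) = a' (Posz k)) -> E a = E a'.

Definition shift1 (a : config) : config := fun i => a (i + 1).
Definition shiftn (s : nat) (a : config) : config := fun i => a (i + s%:Z).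

Definition ins k (i0 : 'I_k.+1) (b : bool) (v : {ffun 'I_k -> bool}) : {ffun 'I_k.+1 -> bool} :=
  [ffun i => if unlift i0 i is Some j then v j else b].

Lemma sum_ins (V : nmodType) k (i0 : 'I_k.+1) (F : {ffun 'I_k.+1 -> bool} -> V) :
  \sum_u F u = \sum_(b : bool) \sum_(v : {ffun 'I_k -> bool}) F (ins i0 b v).
Proof.
rewrite pair_bigA /=.
rewrite (reindex (fun p : bool * {ffun 'I_k -> bool} => ins i0 p.1 p.2)) //=.
exists (fun u => (u i0, [ffun j => u (lift i0 j)])) => [[b v] _ | u _] /=.
- congr pair; first by rewrite /ins ffunE unlift_none.
  by apply/ffunP => j; rewrite !ffunE liftK.
- apply/ffunP => i; rewrite /ins ffunE; case: unliftP => [j ->|->]; by rewrite ?ffunE.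
Qed.

Lemma ext_lt N (u : {ffun 'I_N.+1 -> bool}) k (h : (k < N.+1)%N) :
  ext u (Posz k) = u (Ordinal h).
Proof. by rewrite /ext insubT. Qed.

Lemma card_sum (T : finType) (P : pred T) : #|[set u | P u]| = (\sum_u (P u : nat))%N.
Proof. by rewrite -sum1dep_card big_mkcond /=; apply: eq_bigr => u _; case: (P u). Qed.

Lemma card_top N (E : config -> bool) : dep N E ->
  #|[set u : {ffun 'I_N.+2 -> bool} | E (ext u)]| =
  (2 * #|[set u : {ffun 'I_N.+1 -> bool} | E (ext u)]|)%N.
Proof.
move=> hE; rewrite !card_sum (sum_ins ord_max) big_bool /= mul2n -addnn.
suff h : forall (b : bool) (v : {ffun 'I_N.+1 -> bool}), E (ext (ins ord_max b v)) = E (ext v).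
  by congr addn; apply: eq_bigr => v _; rewrite h.
move=> b v; rewrite /dep in hE; apply: hE => k hk.
have hk2 : (k < N.+2)%N by lia.
have hk1 : (k < N.+1)%N by lia.
rewrite (ext_lt _ hk2) (ext_lt _ hk1).
have -> : Ordinal hk2 = lift ord_max (Ordinal hk1).
  by apply/val_inj; rewrite /= /bump leqNgt ltnS hk.
by rewrite /ins ffunE liftK.
Qed.

Lemma card_shift N (E : config -> bool) : dep N E ->
  #|[set u : {ffun 'I_N.+2 -> bool} | E (shift1 (ext u))]| =
  (2 * #|[set u : {ffun 'I_N.+1 -> bool} | E (ext u)]|)%N.
Proof.
move=> hE; rewrite !card_sum (sum_ins ord0) big_bool /= mul2n -addnn.
suff h : forall (b : bool) (v : {ffun 'I_N.+1 -> bool}), E (shift1 (ext (ins ord0 b v))) = E (ext v).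
  by congr addn; apply: eq_bigr => v _; rewrite h.
move=> b v; rewrite /dep in hE; apply: hE => k hk.
have hk2 : (k.+1 < N.+2)%N by lia.
have hk1 : (k < N.+1)%N by lia.
rewrite /shift1 -[Posz k + 1]/(Posz k + Posz 1) -PoszD addn1 (ext_lt _ hk2) (ext_lt _ hk1).
have -> : Ordinal hk2 = lift ord0 (Ordinal hk1) by apply/val_inj.
by rewrite /ins ffunE liftK.
Qed.

Lemma nu_top (R : realType) N (E : config -> bool) : dep N E ->
  nu_window (R:=R) N.+1 E = nu_window N E.
Proof.
move=> hE; rewrite /nu_window card_top // natrM exprS.
rewrite invfM mulrACA divff ?mul1r //.
Qed.

Lemma nu_shift1 (R : realType) N (E : config -> bool) : dep N E ->
  nu_window (R:=R) N.+1 (fun a => E (shift1 a)) = nu_window N E.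
Proof.
move=> hE; rewrite /nu_window card_shift // natrM exprS.
rewrite invfM mulrACA divff ?mul1r //.
Qed.

Lemma dep_mono {T : Type} N M (E : config -> T) : (N <= M)%N -> dep N E -> dep M E.
Proof. by move=> hNM hE a a' h; apply: hE => k hk; apply: h; apply: leq_trans hNM. Qed.

Lemma nu_window_add (R : realType) d N (E : config -> bool) : dep N E ->
  nu_window (R:=R) (d + N) E = nu_window N E.
Proof.
move=> hE; elim: d => [//|d IH]; rewrite addSn nu_top //.
by apply: dep_mono hE; rewrite leq_addl.
Qed.

Lemma shiftnS s a : shiftn s.+1 a = shiftn s (shift1 a).
Proof.
apply: funext => i; rewrite /shiftn /shift1; congr a.
lia.
Qed.

Lemma shiftn0 a : shiftn 0 a = a.
Proof. by apply: funext => i; rewrite /shiftn addr0. Qed.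

Lemma dep_shift {T : Type} s K (E : config -> T) : dep K E ->
  dep (s + K) (fun a => E (shiftn s a)).
Proof.
move=> hE a a' h; apply: hE => k hk; rewrite /shiftn -PoszD; apply: h.
by rewrite addnC leq_add2l.
Qed.

Lemma nu_window_shift (R : realType) s K (E : config -> bool) : dep K E ->
  nu_window (R:=R) (s + K) (fun a => E (shiftn s a)) = nu_window K E.
Proof.
move=> hE; elim: s => [|s IH].
  by rewrite add0n; congr nu_window; apply: funext => a; rewrite shiftn0.
have -> : (fun a => E (shiftn s.+1 a)) = (fun a => (fun b => E (shiftn s b)) (shift1 a)).
  by apply: funext => a; rewrite shiftnS.
rewrite addSn (@nu_shift1 R (s + K) (fun b => E (shiftn s b))) //; apply: dep_shift hE.
Qed.

Lemma tau_iterE n a i : tau_iter n a i = [forall j : 'I_n.+1, a (i + (j : nat)%:Z)].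
Proof.
elim: n i => [|n IH] i.
  apply/idP/forallP => [h j|h]; first by rewrite (ord1 j) addr0.
  by have := h ord0; rewrite addr0.
rewrite /tau_iter iterS -/(tau_iter n a) /tau /tau0 !IH.
apply/andP/forallP => [[/forallP h1 /forallP h2] j|h].
  case: (ltnP j n.+1) => hj; first by have := h1 (Ordinal hj).
  have hj' : (j : nat) = n.+1 by have := ltn_ord j; lia.
  have := h2 ord_max; rewrite /= -addrA -[1 + _]/(Posz 1 + Posz n) -PoszD hj'.
  by rewrite add1n.
split; apply/forallP => j.
  by have := h (widen_ord (leqnSn _) j).
have := h (lift ord0 j); rewrite /= /bump /= add1n.
by rewrite -addrA -[1 + _]/(Posz 1 + Posz j) -PoszD add1n.
Qed.

Lemma tau_shift n s a i : tau_iter n (shiftn s a) i = tau_iter n a (i + s%:Z).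
Proof. by rewrite !tau_iterE; apply: eq_forallb => j; rewrite /shiftn addrAC. Qed.

Lemma dep_block n m : dep (m + n) (block n m).
Proof.
move=> a a' h; apply/ffunP => i; rewrite !ffunE !tau_iterE.
apply: eq_forallb => j; rewrite -PoszD; apply: h.
have := ltn_ord i; have := ltn_ord j; lia.
Qed.

Section Ent.
Variable R : realType.

Definition Mw (N : nat) : R := 2 ^+ N.+1.

Lemma Mw_gt0 N : 0 < Mw N.
Proof. by rewrite /Mw exprn_gt0. Qed.

Definition HN {X : finType} (N : nat) (f : config -> X) : R :=
  shannon (fun x => nu_window (R:=R) N (fun a => f a == x)).

Lemma regroup {T X : finType} (g : T -> X) (F : X -> R) :
  \sum_u F (g u) = \sum_x (#|[set u | g u == x]|)%:R * F x.
Proof.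
rewrite (partition_big g xpredT) //=; apply: eq_bigr => x _.
rewrite (eq_bigr (fun _ => F x)); last by move=> u /eqP ->.
rewrite (eq_bigl (fun u => u \in [set u | g u == x])); last by move=> u; rewrite inE.
by rewrite sumr_const mulr_natl.
Qed.

Lemma card_ffun_N N : #|{ffun 'I_N.+1 -> bool}| = (2 ^ N.+1)%N.
Proof. by rewrite card_ffun card_bool card_ord. Qed.

Definition Pw {X : finType} N (f : config -> X) (u : {ffun 'I_N.+1 -> bool}) : R :=
  nu_window (R:=R) N (fun a => f a == f (ext u)).
Arguments Pw {X} N f u.

Lemma Pw_gt0 {X : finType} N (f : config -> X) u : 0 < Pw N f u.
Proof.
rewrite /Pw /nu_window divr_gt0 ?exprn_gt0 // ltr0n.
by apply/card_gt0P; exists u; rewrite inE.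
Qed.

Lemma Pw_le1 {X : finType} N (f : config -> X) u : Pw N f u <= 1.
Proof.
rewrite /Pw /nu_window ler_pdivrMr ?exprn_gt0 // mul1r.
have := max_card (mem [set v : {ffun 'I_N.+1 -> bool} | f (ext v) == f (ext u)]).
rewrite card_ffun_N -(ler_nat R) natrX => /le_trans; apply.
by [].
Qed.

Lemma HN_omega {X : finType} N (f : config -> X) :
  HN N f = - ((Mw N)^-1 * \sum_u ln (Pw N f u)).
Proof.
rewrite /HN /shannon /Pw.
rewrite (regroup (fun u => f (ext u)) (fun x => ln (nu_window N (fun a => f a == x)))).
congr (- _); rewrite mulr_sumr; apply: eq_bigr => x _.
rewrite /nu_window -/(Mw N).
set c := #|_|.
case: (posnP c) => [->|hc]; first by rewrite mul0r eqxx mul0r mulr0.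
have -> : (c%:R / Mw N == 0) = false.
  by apply/negbTE; rewrite mulf_neq0 // ?invr_eq0 ?pnatr_eq0 -?lt0n // gt_eqF // Mw_gt0.
by rewrite mulrA [_^-1 * _]mulrC.
Qed.

Lemma HN_ge0 {X : finType} N (f : config -> X) : 0 <= HN N f.
Proof.
rewrite HN_omega oppr_ge0 pmulr_rle0 ?invr_gt0 ?Mw_gt0 //.
by apply: sumr_le0 => u _; apply: ln_le0; apply: Pw_le1.
Qed.

Lemma HN_comp {X Y : finType} N (f : config -> X) (phi : X -> Y) :
  HN N (fun a => phi (f a)) <= HN N f.
Proof.
rewrite !HN_omega lerN2 ler_pM2l ?invr_gt0 ?Mw_gt0 //.
apply: ler_sum => u _; rewrite ler_ln ?posrE ?Pw_gt0 //.
rewrite /Pw /nu_window ler_pM2r ?invr_gt0 ?exprn_gt0 // ler_nat.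
apply: subset_leq_card; apply/fintype.subsetP => v; by rewrite !inE => /eqP ->.
Qed.

End Ent.

Section Ent2.
Variable R : realType.

Lemma nu_ge0 N E : 0 <= nu_window (R:=R) N E.
Proof. by rewrite /nu_window divr_ge0 ?exprn_ge0. Qed.

Lemma sum_p1 {X : finType} N (f : config -> X) :
  \sum_x nu_window (R:=R) N (fun a => f a == x) = 1.
Proof.
rewrite /nu_window -mulr_suml.
have := regroup (fun u : {ffun 'I_N.+1 -> bool} => f (ext u)) (fun _ => (1 : R)).
under [X in _ = X -> _]eq_bigr do rewrite mulr1.
move=> <-; rewrite sumr_const card_ffun_N natrX divff // expf_neq0 //.
Qed.

Lemma ln_le_sub1 (x : R) : 0 < x -> ln x <= x - 1.
Proof.
move=> hx; have := @le_ln1Dx R (x - 1); rewrite addrCA subrr addr0; apply.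
lra.
Qed.

Lemma HN_pair {X Y : finType} N (f : config -> X) (g : config -> Y) :
  HN R N (fun a => (f a, g a)) <= HN R N f + HN R N g.
Proof.
rewrite !HN_omega -opprD lerN2 -mulrDr ler_pM2l ?invr_gt0 ?Mw_gt0 //.
rewrite -big_split /= -subr_le0 -sumrB.
pose pf x := nu_window (R:=R) N (fun a => f a == x).
pose pg y := nu_window (R:=R) N (fun a => g a == y).
pose pfg z := nu_window (R:=R) N (fun a => (f a, g a) == z).
apply: (@le_trans _ _ (\sum_u (pf (f (ext u)) * pg (g (ext u)) / pfg (f (ext u), g (ext u)) - 1))).
  apply: ler_sum => u _.
  have h1 := Pw_gt0 R f u; have h2 := Pw_gt0 R g u.
  have h3 := Pw_gt0 R (fun a => (f a, g a)) u.
  have key : forall a b c : R, 0 < a -> 0 < b -> 0 < c -> ln a + ln b - ln c <= a * b / c - 1.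
    move=> a b c ha hb hc.
    have -> : ln a + ln b - ln c = ln (a * b / c).
      by rewrite lnM ?posrE ?mulr_gt0 ?invr_gt0 // lnM ?posrE // lnV ?posrE.
    by apply: ln_le_sub1; rewrite divr_gt0 ?mulr_gt0.
  exact: key.
rewrite sumrB subr_le0 sumr_const card_ffun_N.
rewrite (regroup (fun u => (f (ext u), g (ext u))) (fun z => pf z.1 * pg z.2 / pfg z)).
apply: (@le_trans _ _ (\sum_z (Mw R N * (pf z.1 * pg z.2)))).
  apply: ler_sum => z _.
  rewrite /pfg /nu_window -/(Mw R N).
  set c := #|_|.
  case: (posnP c) => [->|hc].
    rewrite mul0r; apply: mulr_ge0; [exact: ltW (Mw_gt0 R N)| apply: mulr_ge0; apply: nu_ge0].
  have hc' : (c%:R : R) != 0 by rewrite pnatr_eq0 -lt0n.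
  have hM : Mw R N != 0 by rewrite gt_eqF ?Mw_gt0.
  set q := pf z.1 * pg z.2.
  have -> : c%:R * (q / (c%:R / Mw R N)) = Mw R N * q by field; rewrite hM hc'.
  by [].
rewrite -mulr_sumr -(pair_bigA _ (fun x y => pf x * pg y)) /=.
under eq_bigr do rewrite -mulr_sumr.
rewrite -mulr_suml !sum_p1 mulr1 /Mw natrX.
by rewrite mulr1.
Qed.

End Ent2.

Section Sub.
Variable R : realType.
Variable n : nat.

Definition Gf (L : nat) : R := if L is m.+1 then H_block (R:=R) n m else 0.

Lemma HN_add {X : finType} d N (f : config -> X) : dep N f -> HN R (d + N) f = HN R N f.
Proof.
move=> hf; rewrite /HN; congr shannon; apply: funext => x; apply: nu_window_add.
by move=> a a' h; rewrite (hf a a' h).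
Qed.

Lemma HN_shift {X : finType} s K (f : config -> X) : dep K f ->
  HN R (s + K) (fun a => f (shiftn s a)) = HN R K f.
Proof.
move=> hf; rewrite /HN; congr shannon; apply: funext => x.
apply: (@nu_window_shift R s K (fun a => f a == x)).
by move=> a a' h; rewrite (hf a a' h).
Qed.

Definition catw m1 m2 (w : {ffun 'I_m1.+1 -> bool} * {ffun 'I_m2.+1 -> bool}) :
  {ffun 'I_(m1 + m2.+1).+1 -> bool} :=
  [ffun i : 'I_(m1 + m2.+1).+1 => if ((i : nat) < m1.+1)%N then w.1 (inord i)
                                   else w.2 (inord (i - m1.+1))].

Lemma block_cat m1 m2 a :
  block n (m1 + m2.+1) a = catw (block n m1 a, block n m2 (shiftn m1.+1 a)).
Proof.
apply/ffunP => i; rewrite !ffunE /=; case: ifP => h.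
  by rewrite inordK.
have hi := ltn_ord i.
rewrite inordK; last by move/negbT: h; lia.
rewrite tau_shift -PoszD subnK //; move/negbT: h; lia.
Qed.

Lemma Gf0 : Gf 0 = 0. Proof. by []. Qed.

Lemma Gf_ge0 L : 0 <= Gf L.
Proof. by case: L => [|m] //=; apply: HN_ge0. Qed.

Lemma Gf_sub a b : Gf (a + b) <= Gf a + Gf b.
Proof.
case: a => [|m1]; first by rewrite add0n Gf0 add0r.
case: b => [|m2]; first by rewrite addn0 Gf0 addr0.
rewrite addSn /=.
have E : forall m, H_block (R:=R) n m = HN R (m + n) (block n m) by [].
rewrite !E.
have -> : block n (m1 + m2.+1) =
   (fun a => catw ((fun a => (block n m1 a, block n m2 (shiftn m1.+1 a))) a)).
  by apply: funext => a; rewrite block_cat.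
apply: le_trans (HN_comp _ _ _ _) _.
apply: le_trans (HN_pair _ _ _ _) _.
have -> : (m1 + m2.+1 + n = m2.+1 + (m1 + n))%N by lia.
rewrite HN_add; last exact: dep_block.
have -> : (m2.+1 + (m1 + n) = m1.+1 + (m2 + n))%N by lia.
rewrite HN_shift //; exact: dep_block.
Qed.

End Sub.

Section Fek.
Local Open Scope classical_set_scope.
Variable R : realType.
Variable G : nat -> R.
Hypothesis G0 : G 0 = 0.
Hypothesis Gge0 : forall k, 0 <= G k.
Hypothesis Gsub : forall a b, G (a + b) <= G a + G b.

Lemma G_mul q k r : G (q * k + r) <= q%:R * G k + G r.
Proof.
elim: q => [|q IH]; first by rewrite mul0n add0n mul0r add0r.
rewrite mulSn -addnA; apply: le_trans (Gsub _ _) _.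
rewrite mulrSr mulrDl mul1r; lra.
Qed.


Lemma G_lin r : G r <= r%:R * G 1.
Proof.
elim: r => [|r IH]; first by rewrite G0 mul0r.
rewrite -addn1; apply: le_trans (Gsub _ _) _.
rewrite natrD mulrDl mul1r; lra.
Qed.

Definition Sf : set R := [set x | exists k : nat, x = G k.+1 / k.+1%:R].

Lemma Sf_lb : lbound Sf 0.
Proof. by move=> x [k ->]; rewrite divr_ge0. Qed.

Lemma Sf_inf : has_inf Sf.
Proof. split; first by exists (G 1 / 1%:R), 0%N. by exists 0; apply: Sf_lb. Qed.

Lemma inf_le k : inf Sf <= G k.+1 / k.+1%:R.
Proof. by apply: ge_inf; [case: Sf_inf | exists k]. Qed.

Lemma fekete : (fun m : nat => (m%:R)^-1 * G m.+1) @ \oo --> inf Sf.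
Proof.
apply/cvgrPdist_le => e e0.
have e2 : 0 < e / 2 by rewrite divr_gt0.
have [x [k ->] hx] := inf_adherent e2 Sf_inf.
set K := k.+1.
set C := G K / K%:R + K%:R * G 1.
have hK : (0 : R) < K%:R by rewrite ltr0n.
have xge0 : 0 <= G K / K%:R by rewrite divr_ge0.
have Cge0 : 0 <= C by rewrite addr_ge0 ?mulr_ge0.
exists (Num.Def.trunc (2 * C / e)).+1 => // m /= hm.
have mpos : (0 < m)%N by apply: leq_trans hm.
have hmr : 2 * C / e < m%:R.
  apply: lt_le_trans (truncnS_gt _) _; by rewrite ler_nat.
have mr : (0 : R) < m%:R by rewrite ltr0n.
have hCm : 2 * C < e * m%:R by rewrite -ltr_pdivrMl // mulrC.
set h := inf Sf.
have hge0 : 0 <= h by apply: lb_le_inf; [case: Sf_inf | apply: Sf_lb].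
have hlow : h * (m%:R + 1) <= G m.+1.
  have := inf_le m; rewrite -/h ler_pdivlMr ?ltr0n // -addn1 natrD //.
have hup : G m.+1 <= (m%:R + 1) * (G K / K%:R) + K%:R * G 1.
  have := divn_eq m.+1 K => hdiv.
  have := G_mul (m.+1 %/ K) K (m.+1 %% K); rewrite -hdiv => h1.
  apply: le_trans h1 _.
  have hq : (m.+1 %/ K)%:R * K%:R <= (m%:R + 1 : R).
    by rewrite -natrM natr1 ler_nat leq_trunc_div.
  have hr : G (m.+1 %% K) <= K%:R * G 1.
    apply: le_trans (G_lin _) _; apply: ler_wpM2r; first exact: Gge0 1.
    by rewrite ler_nat ltnW // ltn_mod.
  have -> : (m.+1 %/ K)%:R * G K = ((m.+1 %/ K)%:R * K%:R) * (G K / K%:R).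
    by field; rewrite gt_eqF.
  apply: lerD => //; apply: ler_wpM2r => //.
set v := G m.+1 in hlow hup *; set y := G K / K%:R in hup xge0 *.
have hv : m%:R * ((m%:R)^-1 * v) = v by rewrite mulrA mulfV ?gt_eqF ?mul1r.
set w := (m%:R)^-1 * v.
have hyh : m%:R * y <= m%:R * (h + e / 2) by rewrite ler_pM2l // ltW.
have h1 : m%:R * w <= m%:R * (h + e).
  rewrite hv; rewrite /C -/y in hCm. nra.
have h2 : m%:R * h <= m%:R * w.
  rewrite hv; nra.
rewrite ler_pM2l // in h1; rewrite ler_pM2l // in h2.
rewrite ler_norml; apply/andP; split; lra.
Qed.

End Fek.

Section Bound.
Variable R : realType.
Variable n : nat.

Definition allb (v : {ffun 'I_n.+1 -> bool}) := [forall j, v j].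

Lemma block0_ext v : block n 0 (ext v) = [ffun _ => allb v].
Proof.
apply/ffunP => i; rewrite !ffunE (ord1 i) /= tau_iterE; apply: eq_forallb => j.
rewrite add0r (ext_lt _ (ltn_ord j)).
by have -> : Ordinal (ltn_ord j) = j by apply: val_inj.
Qed.

Lemma card_all1 : #|[set v : {ffun 'I_n.+1 -> bool} | allb v == true]| = 1%N.
Proof.
rewrite -(cards1 ([ffun=> true] : {ffun 'I_n.+1 -> bool})); apply: eq_card => v; rewrite !inE eqb_id.
apply/forallP/eqP => [h|->]; last by move=> j; rewrite ffunE.
by apply/ffunP => j; rewrite ffunE h.
Qed.

Lemma G1_eq : H_block (R:=R) n 0 =
  - ((Mw R n)^-1 * (#|[set v : {ffun 'I_n.+1 -> bool} | allb v == true]|%:R *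
        ln (#|[set v : {ffun 'I_n.+1 -> bool} | allb v == true]|%:R / Mw R n) +
      #|[set v : {ffun 'I_n.+1 -> bool} | allb v == false]|%:R *
        ln (#|[set v : {ffun 'I_n.+1 -> bool} | allb v == false]|%:R / Mw R n))).
Proof.
have -> : H_block (R:=R) n 0 = HN R n (block n 0) by [].
rewrite HN_omega; congr (- (_ * _)).
rewrite (eq_bigr (fun u => (fun x => ln (#|[set v : {ffun 'I_n.+1 -> bool} | allb v == x]|%:R / Mw R n)) (allb u))); last first.
  move=> u _; rewrite /Pw /nu_window -/(Mw R n); congr (ln (_%:R / _)).
  by apply: eq_card => v; rewrite !inE !block0_ext; apply/eqP/eqP => [/ffunP/(_ ord0)|->]; rewrite ?ffunE.
by rewrite (regroup allb (fun x => ln (#|[set v : {ffun 'I_n.+1 -> bool} | allb v == x]|%:R / Mw R n))) big_bool.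
Qed.


Lemma card_all0 : (#|[set v : {ffun 'I_n.+1 -> bool} | allb v == false]|%:R : R) = Mw R n - 1.
Proof.
have := regroup allb (fun _ => (1 : R)).
rewrite big_bool /= !mulr1 sumr_const card_ffun_N card_all1 => /esym.
by rewrite /Mw natrX mulr1n => <-; lra.
Qed.

Lemma ln2_ge : 1 / 2 <= ln (2 : R).
Proof.
have := ln_le_sub1 (x := (2 : R)^-1) ltac:(by rewrite invr_gt0).
rewrite lnV ?posrE // => h; lra.
Qed.

Lemma G1_le : H_block (R:=R) n 0 <= (Mw R n)^-1 * (n.+1%:R * ln 2 + 1).
Proof.
rewrite G1_eq card_all1 card_all0.
have hM2 : 2 <= Mw R n.
  rewrite /Mw exprS -[X in X <= _]mulr1 ler_wpM2l // exprn_ege1 //; lra.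
have hM : 0 < Mw R n by lra.
have hlnM : ln (1%:R / Mw R n) = - (n.+1%:R * ln 2).
  rewrite mul1r lnV ?posrE // /Mw lnXn // mulr_natl //.
rewrite hlnM mul1r.
set y := (Mw R n - 1) / Mw R n.
have hy : 0 < y by rewrite divr_gt0 // subr_gt0; lra.
have hly : - ln y <= y^-1 - 1.
  have := ln_le_sub1 (x := y^-1) ltac:(by rewrite invr_gt0); by rewrite lnV ?posrE.
have hM1 : 0 < Mw R n - 1 by lra.
have hyi : (Mw R n - 1) * y^-1 = Mw R n by rewrite /y; field; rewrite (gt_eqF hM) (gt_eqF hM1).
have key : -1 <= (Mw R n - 1) * ln y.
  have : (Mw R n - 1) * (- ln y) <= (Mw R n - 1) * (y^-1 - 1) by rewrite ler_wpM2l // subr_ge0; lra.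
  rewrite mulrBr hyi mulr1; lra.
rewrite -mulrN ler_pM2l ?invr_gt0 //; lra.
Qed.

Lemma final_ineq : (Mw R n)^-1 * (n.+1%:R * ln 2 + 1) <= 3 * ln (2 : R) * 2 `^ (- (n%:R / 2)).
Proof.
set L := ln (2 : R).
have hL := ln2_ge; rewrite -/L in hL.
set t := (2 : R) `^ (n%:R / 2).
have ht : 0 < t by rewrite powR_gt0.
have htt : t * t = 2 ^+ n.
  rewrite /t -powRD; last by apply/implyP => _; rewrite pnatr_eq0.
  have -> : n%:R / 2 + n%:R / 2 = n%:R :> R by field.
  by rewrite powR_mulrn.
have hte : 1 + n%:R / 2 * L <= t.
  rewrite /t /powR ifF; [apply: expR_ge1Dx | by rewrite pnatr_eq0].
rewrite powRN -/t /Mw exprS -htt.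
have hn : (0 : R) <= n%:R by [].
have key : n.+1%:R * L + 1 <= 6 * L * t.
  rewrite -natr1; nra.
have -> : 3 * L * t^-1 = (2 * (t * t))^-1 * (6 * L * t) by field; rewrite gt_eqF.
apply: ler_wpM2l; last exact: key.
by rewrite invr_ge0 ltW // !mulr_gt0.

Qed.

End Bound.

Local Open Scope classical_set_scope.
Local Open Scope ring_scope.

Theorem proposition4p3 (R : realType) (n : nat) :
  exists h : R,
    (@entropy_seq R n @ \oo --> h) /\
    h <= 3 * ln 2 * (2 `^ (- (n%:R / 2))).
Proof.
exists (inf (Sf (Gf R n))); split.
  have -> : @entropy_seq R n = (fun m : nat => (m%:R)^-1 * Gf R n m.+1) by [].
  apply: fekete; [by [] | exact: Gf_ge0 | exact: Gf_sub].
apply: le_trans (inf_le (Gf_ge0 R n) 0) _.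
rewrite divr1; apply: le_trans (G1_le R n) _.
exact: final_ineq.
Qed.
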